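(* Let $L=dN$ with integers $d\ge2$, $N\ge1$, consider the flat initial condition, and let $0<|z|<r_0$ with $\mathcal E_{\rm flat}(z)\ne0$. Then for $v\in\mathcal R_z$ and $u\in\mathcal L_z$, $$\mathrm{ch}_{\rm flat}(v,u;z)=\begin{cases}\dfrac{q'_{z,\mathrm R}(v)\,u^N(u+1)^{d-1}}{q_{z,\mathrm R}(u)\,v^N(v+1)^{d-1}}(u-v),&\text{if }u(u+1)^{d-1}=v(v+1)^{d-1},\\[2mm] 0,&\text{otherwise.}\end{cases}$$
   Context: $\rho=N/L=1/d$, $r_0=\rho^\rho(1-\rho)^{1-\rho}$. Flat initial condition $Y=(y_1,\dots,y_N)$, $y_i=(i-N)d$. For $0<|z|<r_0$, $\mathcal L_z$ ($\mathcal R_z$) is the set of roots of $w^N(w+1)^{L-N}=z^L$ with real part $<-\rho$ ($>-\rho$); $q_{z,\mathrm R}(w)=\prod_{v\in\mathcal R_z}(w-v)$. $\mathcal G_\lambda(W)=\det[w_i^{N-j}(w_i+1)^{\lambda_j}]/\det[w_i^{N-j}]$; $\lambda(Y)=(y_N,y_{N-1}+1,\dots,y_1+N-1)$; $\mathcal E_{\rm flat}(z)=\mathcal G_{\lambda(Y)}(\mathcal R_z)$ and $\mathrm{ch}_{\rm flat}(v,u;z)=\mathcal G_{\lambda(Y)}(\mathcal R_z\cup\{u\}\setminus\{v\})/\mathcal E_{\rm flat}(z)$. *)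

(* Defs.v *)
From HB Require Import structures.
From mathcomp Require Import all_boot all_order all_algebra.
From mathcomp Require Import complex.
Set Implicit Arguments. Unset Strict Implicit. Unset Printing Implicit Defensive.
Import Order.TTheory GRing.Theory Num.Theory.
Local Open Scope ring_scope.

Section Flat.
Variable R : rcfType.
Local Notation C := R[i].

Definition rho (N L : nat) : C := N%:R / L%:R.

(* r_0 = rho^rho (1-rho)^(1-rho), written for rho = 1/d:
   (1/d)^(1/d) * ((d-1)/d)^((d-1)/d) *)
Definition r0 (d : nat) : C :=
  d.-root (1 / d%:R) * (d.-root ((d%:R - 1) / d%:R)) ^+ d.-1.

Definition bethe_poly (N L : nat) (z : C) : {poly C} :=
  'X^N * ('X + 1) ^+ (L - N) - (z ^+ L)%:P.

Definition bethe_roots (N L : nat) (z : C) : seq C :=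
  proj1_sig (closed_field_poly_normal (bethe_poly N L z)).

Definition Lset (N L : nat) (z : C) : seq C :=
  undup [seq w <- bethe_roots N L z | 'Re w < - rho N L].
Definition Rset (N L : nat) (z : C) : seq C :=
  undup [seq w <- bethe_roots N L z | 'Re w > - rho N L].

Definition qR (N L : nat) (z : C) : {poly C} :=
  \prod_(v <- Rset N L z) ('X - v%:P).

(* G_lambda(W) = det[w_i^{N-j} (w_i+1)^{lambda_j}] / det[w_i^{N-j}],
   indices 0-based: row i, column j, exponent N-1-j, lambda j = lambda_{j+1} *)
Definition Gfun (N : nat) (lam : nat -> int) (W : seq C) : C :=
  \det (\matrix_(i < N, j < N) (W`_i ^+ (N.-1 - j) * (W`_i + 1) ^ (lam j)))
  / \det (\matrix_(i < N, j < N) (W`_i ^+ (N.-1 - j))).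

Definition yflat (N d : nat) (i : nat) : int := (i%:Z - N%:Z) * d%:Z.

(* lambda(Y) = (y_N, y_{N-1} + 1, ..., y_1 + N - 1); 0-based entry j is y_{N-j} + j *)
Definition lambdaY (N : nat) (y : nat -> int) (j : nat) : int :=
  y (N - j)%N + j%:Z.

Definition Eflat (N d : nat) (z : C) : C :=
  Gfun N (lambdaY N (yflat N d)) (Rset N (d * N) z).

(* R_z ∪ {u} \ {v} *)
Definition swap_root (v u : C) (W : seq C) : seq C :=
  [seq (if w == v then u else w) | w <- W].

Definition chflat (N d : nat) (v u z : C) : C :=
  Gfun N (lambdaY N (yflat N d)) (swap_root v u (Rset N (d * N) z))
  / Eflat N d z.

End Flat.

(* Main.v *)
Require Import Defs.
From HB Require Import structures.
From mathcomp Require Import all_boot all_order all_algebra all_field.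
From mathcomp Require Import complex.
From mathcomp Require Import ring lra zify.
Import Order.TTheory GRing.Theory Num.Theory.
Local Open Scope ring_scope.
Set Implicit Arguments. Unset Strict Implicit. Unset Printing Implicit Defensive.

Section Analytic.
Variable R : rcfType.
Local Notation C := R[i].
Variable m : nat.
Hypothesis hm : (0 < m)%N.
Local Notation d := m.+1.

Definition fw (w : C) := w * (w + 1) ^+ m.
Definition kk : C := m%:R / d%:R.
Definition KK : C := d%:R^-1 * kk ^+ m.
Definition aa : C := - d%:R^-1.

Lemma d_gt0 : 0 < d%:R :> C. Proof. by rewrite ltr0n. Qed.
Lemma d_neq0 : d%:R != 0 :> C. Proof. by rewrite pnatr_eq0. Qed.
Lemma kk_gt0 : 0 < kk. Proof. by rewrite /kk divr_gt0 ?ltr0n. Qed.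
Lemma KK_gt0 : 0 < KK.
Proof. by rewrite /KK mulr_gt0 ?invr_gt0 ?ltr0n ?exprn_gt0 ?kk_gt0. Qed.
Lemma aa1 : aa + 1 = kk.
Proof. rewrite /aa /kk -natr1. by field; rewrite natr1 d_neq0. Qed.

Lemma Re1 : 'Re (1 : C) = 1. Proof. exact: (Creal_ReP _ (rpred1 _)). Qed.

Lemma Re_le_norm (w : C) : 'Re w <= `|w|.
Proof. exact: (leif_Re_Creal w). Qed.

Lemma norm_gt_kk (w : C) : aa < 'Re w -> kk < `|w + 1|.
Proof.
move=> h; apply: (lt_le_trans _ (Re_le_norm _)).
by rewrite raddfD /= Re1 -aa1 ltrD2r.
Qed.
Lemma s_eq (w c : C) : w + 1 != 0 -> fw w = c -> 1 - (w + 1)^-1 = c * (w + 1)^-1 ^+ d.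
Proof.
move=> h <-; rewrite /fw exprVn exprS invfM.
have hP : (w + 1) ^+ m != 0 by rewrite expf_neq0.
move: hP h; set P := (w + 1) ^+ m => hP h.
by field; rewrite hP h.
Qed.

Lemma fw_uniq (w1 w2 c : C) : aa < 'Re w1 -> aa < 'Re w2 ->
  fw w1 = c -> fw w2 = c -> `|c| < KK -> w1 = w2.
Proof.
move=> h1 h2 f1 f2 hc.
have k1 := norm_gt_kk h1; have k2 := norm_gt_kk h2.
have n1 : w1 + 1 != 0 by rewrite -normr_gt0 (lt_trans kk_gt0).
have n2 : w2 + 1 != 0 by rewrite -normr_gt0 (lt_trans kk_gt0).
have e1 := s_eq n1 f1; have e2 := s_eq n2 f2.
move: e1 e2; set s1 := (w1 + 1)^-1; set s2 := (w2 + 1)^-1 => e1 e2.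
set S := \sum_(i < d) s1 ^+ (d.-1 - i) * s2 ^+ i.
have key : (s1 - s2) * (1 + c * S) = 0.
  have E' : s1 - s2 = - c * ((s1 - s2) * S).
    have E : s1 - s2 = (1 - s2) - (1 - s1) by ring.
    by rewrite {1}E e1 e2 /S -subrXX; ring.
  have -> : (s1 - s2) * (1 + c * S) = (s1 - s2) + c * ((s1 - s2) * S) by ring.
  by rewrite {1}E'; ring.
have ks : forall s w, s = (w + 1)^-1 -> kk < `|w + 1| -> `|s| < kk^-1.
  move=> s w -> hk; rewrite normfV.
  by rewrite ltf_pV2 ?posrE ?kk_gt0 // (lt_trans kk_gt0).
have bS : `|S| <= kk^-1 ^+ m *+ d.
  apply: (le_trans (ler_norm_sum _ _ _)).
  apply: le_trans (_ : \sum_(i < d) kk^-1 ^+ m <= _); last by rewrite sumr_const card_ord.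
  apply: ler_sum => i _.
  rewrite normrM !normrX.
  have -> : kk^-1 ^+ m = kk^-1 ^+ (d.-1 - i) * kk^-1 ^+ i.
    by rewrite -exprD subnK // -ltnS.
  apply: ler_pM; rewrite ?exprn_ge0 ?normr_ge0 //; apply: lerXn2r;
    rewrite ?nnegrE ?normr_ge0 ?invr_ge0 ?ltW ?kk_gt0 //; [exact: (ks _ w1 erefl k1) | exact: (ks _ w2 erefl k2)].
have bc : `|c * S| < 1.
  have Bp : 0 < kk^-1 ^+ m *+ d by rewrite pmulrn_rgt0 // exprn_gt0 // invr_gt0 kk_gt0.
  rewrite normrM; apply: (le_lt_trans (ler_wpM2l (normr_ge0 c) bS)).
  have -> : 1 = KK * (kk^-1 ^+ m *+ d).
    have kn : kk != 0 by rewrite gt_eqF ?kk_gt0.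
    have kmn : kk ^+ m != 0 by rewrite expf_neq0.
    rewrite /KK -mulr_natr exprVn; move: kmn (d_neq0); set X := kk ^+ m => kmn dn.
    by field; rewrite kmn nat1r dn.
  by rewrite ltr_pM2r.
have nz : 1 + c * S != 0.
  apply/negP; rewrite addrC addr_eq0 => /eqP e.
  by move: bc; rewrite e normrN normr1 ltxx.
move/eqP: key; rewrite mulf_eq0 (negbTE nz) orbF subr_eq0 => /eqP /invr_inj /addIr.
done.
Qed.

Lemma aa_real : aa \is Num.real.
Proof. by rewrite /aa rpredN rpredV realn. Qed.

Lemma line_ge (w : C) : 'Re w = aa -> KK <= `|fw w|.
Proof.
move=> hw.
have h1 : d%:R^-1 <= `|w|.
  apply: le_trans (leif_normC_Re_Creal w).
  by rewrite hw /aa normrN ger0_norm // invr_ge0 ler0n.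
have h2 : kk <= `|w + 1|.
  apply: le_trans (Re_le_norm _).
  by rewrite raddfD /= Re1 hw aa1.
rewrite /KK /fw normrM normrX.
have k0 : 0 <= kk := ltW kk_gt0.
apply: ler_pM; rewrite ?invr_ge0 ?ler0n ?exprn_ge0 //.
by apply: lerXn2r; rewrite ?nnegrE ?normr_ge0.
Qed.

Lemma logderiv (rs : seq C) (y : C) : (forall r, r \in rs -> y - r != 0) ->
  (\prod_(r <- rs) ('X - r%:P))^`().[y] =
  (\prod_(r <- rs) ('X - r%:P)).[y] * \sum_(r <- rs) (y - r)^-1.
Proof.
elim: rs => [|r rs IH] h; first by rewrite !big_nil derivC horner0 mulr0.
rewrite !big_cons derivM derivXsubC mul1r hornerD hornerM IH; last first.
  by move=> x hx; apply: h; rewrite inE hx orbT.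
rewrite hornerM hornerXsubC.
have hr : y - r != 0 by apply: h; rewrite inE eqxx.
move: hr; set Q := (\prod_(j <- rs) ('X - j%:P)).[y]; set S := \sum_(j <- rs) (y - j)^-1.
move=> hr; by field.
Qed.

Lemma fw_exists (c : C) : `|c| < KK -> exists w, fw w = c /\ aa < 'Re w.
Proof.
move=> hc.
set p := 'X * ('X + 1) ^+ m - c%:P.
have hpe : forall x, p.[x] = fw x - c.
  by move=> x; rewrite /p /fw !hornerE.
case: (closed_field_poly_normal p) => rs hp.
have lp : lead_coef p = 1.
  have mP : (@GRing.exp {poly C} ('X + 1) m) \is monic.
    by have := monic_exp m (monicXaddC (1 : C)); rewrite polyC1.
  have mQ : ('X : {poly C}) * ('X + 1) ^+ m \is monic by rewrite monicMl ?monicX.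
  rewrite /p lead_coefDl ?(monicP mQ) //.
  rewrite size_opp (leq_ltn_trans (size_polyC_leq1 _)) // size_monicM ?monicX ?monic_neq0 //.
  by rewrite size_polyX /= ltnS lt0n size_poly_eq0 monic_neq0.
rewrite lp scale1r in hp.
have rsr : forall r, r \in rs -> fw r = c.
  move=> r hr; apply/eqP; rewrite -subr_eq0 -hpe hp horner_prod.
  by rewrite (big_rem r hr) /= hornerXsubC subrr mul0r.
case: (boolP (has (fun r => aa < 'Re r) rs)) => [/hasP [r rin hr] | /hasPn hn].
  by exists r; split => //; apply: rsr.
exfalso.
have hlt : forall r, r \in rs -> 'Re r < aa.
  move=> r hr; have := hn r hr; rewrite -real_leNgt ?aa_real ?Creal_Re //.
  rewrite le_eqVlt => /orP [/eqP e|//].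
  by have := line_ge e; rewrite (rsr r hr) => h; move: (le_lt_trans h hc); rewrite ltxx.
have nz : forall r, r \in rs -> aa - r != 0.
  move=> r hr; apply/eqP => e.
  have er : r = aa by apply/eqP; rewrite eq_sym -subr_eq0 e.
  by have := hlt r hr; rewrite er (Creal_ReP _ aa_real) ltxx.
have hd : (p^`()).[aa] = 0.
  rewrite /p derivB derivC subr0 derivM derivX mul1r deriv_exp derivD derivX derivC addr0 mul1r.
  rewrite !(hornerE, hornerMn) aa1 -{1}(prednK hm) exprS.
  have -> : kk * kk ^+ m.-1 + aa * (kk ^+ m.-1 *+ m) = kk ^+ m.-1 * (kk + aa * m%:R).
    by rewrite -mulr_natr; ring.
  have -> : kk + aa * m%:R = 0 by rewrite /kk /aa; field; rewrite nat1r d_neq0.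
  by rewrite mulr0.
have := logderiv nz; rewrite -hp hd => /esym /eqP; rewrite mulf_eq0 => /orP [].
  apply/negP; rewrite hp horner_prod prodf_seq_neq0.
  by apply/allP => r hr /=; rewrite hornerXsubC nz.
move/eqP => e.
have pos : forall r, r \in rs -> 0 < 'Re ((aa - r)^-1).
  move=> r hr; rewrite ReV raddfB /= (Creal_ReP _ aa_real).
  by rewrite divr_gt0 ?subr_gt0 ?hlt // exprn_gt0 // normr_gt0 nz.
have : 'Re (\sum_(r <- rs) (aa - r)^-1) = 0 by rewrite e raddf0.
rewrite raddf_sum.
case: rs hp rsr hn hlt nz pos {e} => [|r0 rs] hp rsr hn hlt nz pos.
  have h0 : p.[0] = p.[1] by rewrite hp big_nil !hornerE.
  move: h0; rewrite !hpe /fw => /addIr; rewrite mul0r mul1r => /esym /eqP.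
  by rewrite -mulr2n expf_eq0 pnatr_eq0 andbF.
rewrite big_cons => h.
have : 0 < 'Re ((aa - r0)^-1) + \sum_(j <- rs) 'Re ((aa - j)^-1).
  apply: (lt_le_trans (pos r0 (mem_head _ _))); rewrite lerDl.
  rewrite big_seq; apply: sumr_ge0 => j hj; apply: ltW; apply: pos.
  by rewrite inE hj orbT.
by rewrite h ltxx.
Qed.
End Analytic.

Section Det.
Variable R : rcfType.
Local Notation C := R[i].
Variables (m N : nat).
Hypothesis hm : (0 < m)%N.
Hypothesis hN : (0 < N)%N.
Local Notation d := m.+1.
Local Notation lam := (lambdaY N (yflat N d)).

Definition Amat (y : 'I_N -> C) : 'M[C]_N :=
  \matrix_(i, j) (y i ^+ (N.-1 - j) * (y i + 1) ^ (lam j)).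
Definition Vmat (y : 'I_N -> C) : 'M[C]_N := \matrix_(i, j) (y i ^+ (N.-1 - j)).
Definition Bmat (y : 'I_N -> C) : 'M[C]_N := \matrix_(i, j) ((fw m (y i))^-1 ^+ j).

Lemma Gfun_eq (W : seq C) :
  Gfun N lam W = \det (Amat (fun i => W`_i)) / \det (Vmat (fun i => W`_i)).
Proof. by []. Qed.

Lemma eq_Amat y1 y2 : y1 =1 y2 -> Amat y1 = Amat y2.
Proof. by move=> h; apply/matrixP => i j; rewrite !mxE h. Qed.
Lemma eq_Vmat y1 y2 : y1 =1 y2 -> Vmat y1 = Vmat y2.
Proof. by move=> h; apply/matrixP => i j; rewrite !mxE h. Qed.

Lemma lam_eq (j : nat) : (j < N)%N -> lam j = - ((j * m)%N)%:Z.
Proof. move=> hj; rewrite /lambdaY /yflat. lia. Qed.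

Lemma detA (y : 'I_N -> C) : (forall i, y i != 0) -> (forall i, y i + 1 != 0) ->
  \det (Amat y) = (\prod_i y i ^+ N.-1) * \det (Bmat y).
Proof.
move=> h0 h1.
have -> : Amat y = diag_mx (\row_i (y i ^+ N.-1)) *m Bmat y.
  apply/matrixP => i j; rewrite mul_diag_mx !mxE lam_eq // -exprnN.
  rewrite /fw exprVn exprMn -exprM mulnC invfM mulrA.
  have hj : (j <= N.-1)%N by rewrite -ltnS prednK.
  rewrite -{2}(subnK hj) exprD -(mulrA _ (y i ^+ j)) mulfV ?mulr1 //.
  by rewrite expf_neq0.
by rewrite det_mulmx det_diag; congr (_ * _); apply: eq_bigr => i _; rewrite mxE.
Qed.

Definition upd (x : 'I_N -> C) (k : 'I_N) (w : C) := fun i => if i == k then w else x i.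

Definition Ppoly (x : 'I_N -> C) (k : 'I_N) : {poly C} :=
  \sum_(j < N) cofactor (Vmat x) k j *: 'X^(N.-1 - j).

Lemma Ppoly_horner x k w : (Ppoly x k).[w] = \det (Vmat (upd x k w)).
Proof.
rewrite (expand_det_row _ k) /Ppoly horner_sum; apply: eq_bigr => j _.
rewrite hornerZ hornerXn mulrC !mxE /upd eqxx; congr (_ * _).
rewrite /cofactor; congr (_ * \det _); apply/matrixP => a b; rewrite !mxE.
by rewrite eq_sym (negbTE (neq_lift _ _)).
Qed.

Lemma Ppoly_size x k : (size (Ppoly x k) <= N)%N.
Proof.
rewrite /Ppoly; apply: (big_ind (fun q : {poly C} => (size q <= N)%N)).
- by rewrite size_poly0.
- by move=> p q hp hq; rewrite (leq_trans (size_polyD _ _)) // geq_max hp hq.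
move=> j _; rewrite (leq_trans (size_scale_leq _ _)) // size_polyXn.
by rewrite (leq_ltn_trans (leq_subr _ _)) // ltn_predL.
Qed.

Lemma Ppoly_root x k (l : 'I_N) : l != k -> (Ppoly x k).[x l] = 0.
Proof.
move=> hl; rewrite Ppoly_horner; apply: (determinant_alternate hl) => j.
by rewrite !mxE /upd eqxx (negbTE hl).
Qed.

End Det.

Lemma sep_XnsubC (F : fieldType) n (c : F) : c != 0 -> (n.+1)%:R != 0 :> F ->
  separable_poly ('X^(n.+1) - c%:P).
Proof.
move=> c0 n0; rewrite unlock linearB /= derivC subr0 derivXn -scaler_nat coprimepZr //= exprSr coprimep_sym.
rewrite mulrC coprimep_addl_mul -polyCN.
by rewrite -[X in coprimep _ X]mulr1 mul_polyC coprimepZr ?oppr_eq0 ?coprimep1 //.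
Qed.

Section Main.
Variable R : rcfType.
Local Notation C := R[i].
Variables (m N : nat).
Hypothesis hm : (0 < m)%N.
Hypothesis hN : (0 < N)%N.
Local Notation d := m.+1.
Variable z : C.
Hypothesis hz : z != 0.
Hypothesis hzr : `|z| < r0 R d.
Local Notation S := (Rset N (d * N) z).

Lemma rho_eq : rho R N (d * N) = d%:R^-1.
Proof.
have n0 : N%:R != 0 :> C by rewrite pnatr_eq0 -lt0n.
have d0 : d%:R != 0 :> C by rewrite pnatr_eq0.
by rewrite /rho natrM; field; rewrite n0 nat1r d0.
Qed.

Lemma zd_lt : `|z ^+ d| < KK R m.
Proof.
have e2 : (d%:R - 1) / d%:R = kk R m :> C by rewrite /kk -natr1 addrK.
have r0e : r0 R d = d.-root (1 / d%:R) * d.-root (kk R m) ^+ m by rewrite /r0 e2.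
have r0p : 0 <= r0 R d.
  by rewrite r0e mulr_ge0 ?exprn_ge0 ?rootC_ge0 ?divr_ge0 ?ler0n ?ltW ?kk_gt0.
have r0d : r0 R d ^+ d = KK R m.
  rewrite r0e exprMn -exprM mulnC exprM !rootCK //.
  by rewrite /KK div1r.
rewrite normrX -r0d ltrXn2r //.
Qed.

Lemma bethe_mem w :
  (w \in bethe_roots N (d * N) z) = ((fw m w) ^+ N == (z ^+ d) ^+ N).
Proof.
rewrite /bethe_roots; case: (closed_field_poly_normal _) => rs /= hp.
set p := bethe_poly N (d * N) z in hp.
have hpw : forall y, p.[y] = (fw m y) ^+ N - (z ^+ d) ^+ N.
  move=> y; rewrite /p /bethe_poly !hornerE /fw.
  have -> : (d * N - N = m * N)%N by rewrite mulSn addKn.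
  by rewrite exprMn -exprM mulnC -exprM mulnC.
have pn0 : p != 0.
  apply/eqP => p0; have := hpw 0; rewrite p0 horner0 /fw mul0r expr0n.
  rewrite (gtn_eqF hN) sub0r => /eqP; rewrite eq_sym oppr_eq0 !expf_eq0 (negbTE hz).
  by rewrite !andbF.
have lc : lead_coef p != 0 by rewrite lead_coef_eq0.
have : root p w = (w \in rs) by rewrite hp rootZ // root_prod_XsubC.
by rewrite /root hpw subr_eq0 => <-.
Qed.

Lemma Rset_mem (w : C) : (w \in S) = ((fw m w) ^+ N == (z ^+ d) ^+ N) && (aa R m < 'Re w).
Proof. by rewrite /Rset mem_undup mem_filter bethe_mem rho_eq andbC. Qed.

Lemma Lset_mem (w : C) : (w \in Lset N (d * N) z) =
  ((fw m w) ^+ N == (z ^+ d) ^+ N) && ('Re w < aa R m).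
Proof. by rewrite /Lset mem_undup mem_filter bethe_mem rho_eq andbC. Qed.

Lemma root_props (w : C) : (fw m w) ^+ N = (z ^+ d) ^+ N -> `|fw m w| < KK R m /\ fw m w != 0.
Proof.
move=> h.
have : `|fw m w| ^+ N == `|z ^+ d| ^+ N by rewrite -!normrX h.
rewrite eqrXn2 ?normr_ge0 // => /eqP e.
split; first by rewrite e zd_lt.
by rewrite -normr_gt0 e normr_gt0 expf_neq0.
Qed.

Lemma root_nz (w : C) : fw m w != 0 -> w != 0 /\ w + 1 != 0.
Proof.
rewrite /fw mulf_eq0 negb_or => /andP [-> h]; split => //.
by apply: contra h => /eqP ->; rewrite expr0n (gtn_eqF hm).
Qed.

Lemma S_props : [/\ uniq S, size S = N &
  forall t, t ^+ N = (z ^+ d) ^+ N -> exists2 w, w \in S & fw m w = t].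
Proof.
have surj : forall t, t ^+ N = (z ^+ d) ^+ N -> exists2 w, w \in S & fw m w = t.
  move=> t ht.
  have : `|t| ^+ N == `|z ^+ d| ^+ N by rewrite -!normrX ht.
  rewrite eqrXn2 ?normr_ge0 // => /eqP e.
  have [w [fwt hw]] : exists w, fw m w = t /\ aa R m < 'Re w.
    by apply: fw_exists => //; rewrite e zd_lt.
  by exists w => //; rewrite Rset_mem fwt ht eqxx hw.
have uS : uniq S by apply: undup_uniq.
split => //.
set b := (z ^+ d) ^+ N.
case: (closed_field_poly_normal ('X^N - b%:P)) => ts hp.
rewrite lead_coefXnsubC // scale1r in hp.
have bn0 : b != 0 by rewrite !expf_neq0.
have uts : uniq ts.
  rewrite -separable_prod_XsubC -hp -(prednK hN); apply: sep_XnsubC => //.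
  by rewrite prednK // pnatr_eq0 -lt0n.
have mts : forall t, (t \in ts) = (t ^+ N == b).
  move=> t; rewrite -root_prod_XsubC -hp /root !hornerE subr_eq0 //.
have szts : size ts = N.
  have := size_prod_XsubC ts id; rewrite -hp size_XnsubC //; by case.
have injS : {in S &, injective (fw m)}.
  move=> w1 w2; rewrite !Rset_mem => /andP [/eqP h1 r1] /andP [/eqP h2 r2] e.
  have [k1 _] := root_props h1.
  by apply: (fw_uniq hm r1 r2 erefl (esym e)).
have umap : uniq (map (fw m) S) by rewrite map_inj_in_uniq.
have l1 : (size (map (fw m) S) <= size ts)%N.
  apply: uniq_leq_size => // t /mapP [w hw ->].
  by rewrite mts; move: hw; rewrite Rset_mem => /andP [].
have l2 : (size ts <= size (map (fw m) S))%N.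
  apply: uniq_leq_size => // t; rewrite mts => /eqP ht.
  by have [w hw <-] := surj t ht; rewrite map_f.
rewrite size_map szts in l1 l2.
by apply/eqP; rewrite eqn_leq l1 l2.
Qed.


Lemma main_m (v u : C) : Eflat N d z != 0 -> v \in S -> u \in Lset N (d * N) z ->
  chflat N d v u z =
  (if fw m u == fw m v then
     (qR N (d * N) z)^`().[v] * (u ^+ N * (u + 1) ^+ m)
       / ((qR N (d * N) z).[u] * (v ^+ N * (v + 1) ^+ m)) * (u - v)
   else 0).
Proof.
move=> hE hv hu.
have [uS szS surj] := S_props.
move: (hv); rewrite Rset_mem => /andP [/eqP fv rv].
move: (hu); rewrite Lset_mem => /andP [/eqP fu ru].
have [_ fvn] := root_props fv; have [_ fun0] := root_props fu.
have [un0 u1n0] := root_nz fun0.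
pose x := fun i : 'I_N => S`_i.
have xS : forall i : 'I_N, x i \in S by move=> i; rewrite /x mem_nth // szS.
have hk : (index v S < N)%N by have := index_mem v S; rewrite hv szS.
pose k := Ordinal hk.
have xk : x k = v by rewrite /x /= nth_index.
have ek : forall i : 'I_N, (x i == v) = (i == k).
  move=> i; apply/eqP/eqP => [e | ->]; last exact: xk.
  by apply: val_inj => /=; rewrite -e /x index_uniq ?szS.
have xnz : forall i, fw m (x i) != 0.
  by move=> i; move: (xS i); rewrite Rset_mem => /andP [/eqP /root_props [_ ->]].
have hW' : forall i : 'I_N, (swap_root v u S)`_i = upd x k u i.
  by move=> i; rewrite /swap_root (nth_map 0) ?szS // /upd -ek.
have ux : forall i, upd x k u i != 0 /\ upd x k u i + 1 != 0.
  by move=> i; rewrite /upd; case: (i == k) => //; apply: root_nz.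
have xx : forall i, x i != 0 /\ x i + 1 != 0 by move=> i; apply: root_nz.
rewrite /chflat /Eflat !Gfun_eq (eq_Amat _ hW') (eq_Vmat hW') -/(Amat _ x) -/(Vmat x).
rewrite /Eflat Gfun_eq -/(Amat _ x) -/(Vmat x) in hE.
rewrite !detA //; try by move=> i; case: (ux i). all: try by move=> i; case: (xx i).
rewrite !detA // in hE; try by move=> i; case: (xx i).
rewrite -/x in hE *.
case: ifP => hf; last first.
  have [w wS fww] := surj (fw m u) fu.
  have hl : (index w S < N)%N by have := index_mem w S; rewrite wS szS.
  pose l := Ordinal hl.
  have xl : x l = w by rewrite /x /= nth_index.
  have lk : l != k.
    apply/eqP => e; move: hf; rewrite -fww -xl e xk eqxx //.
  rewrite (@determinant_alternate _ _ (Bmat m (upd x k u)) k l) 1?eq_sym //.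
    by rewrite mulr0 !mul0r.
  by move=> j; rewrite !mxE /upd eqxx (negbTE lk) xl fww.
have eB : Bmat m (upd x k u) = Bmat m x.
  apply/matrixP => i j; rewrite !mxE /upd; case: eqP => [-> | _] //.
  by rewrite xk (eqP hf).
have pu : \prod_i upd x k u i ^+ N.-1 = u ^+ N.-1 * \prod_(i | i != k) x i ^+ N.-1.
  rewrite (bigD1 k) //= /upd eqxx; congr (_ * _).
  by apply: eq_bigr => i /negbTE ->.
have px : \prod_(i < N) S`_i ^+ N.-1 = v ^+ N.-1 * \prod_(i | i != k) x i ^+ N.-1.
  by rewrite (bigD1 k) //= nth_index.
set Q := \prod_(w <- rem v S) ('X - w%:P).
have hq : qR N (d * N) z = ('X - v%:P) * Q by rewrite /qR (big_rem v hv).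
have qRu : (qR N (d * N) z).[u] = (u - v) * Q.[u] by rewrite hq hornerM hornerXsubC.
have qRv : (qR N (d * N) z)^`().[v] = Q.[v].
  by rewrite hq derivM derivXsubC mul1r hornerD hornerM hornerXsubC subrr mul0r addr0.
have [c0 hP] : exists c0, forall w, (Ppoly x k).[w] = c0 * Q.[w].
  have hall : all (root (Ppoly x k)) (rem v S).
    apply/allP => w; rewrite (mem_rem_uniq _ uS) => /andP [wv wS] /=.
    have hl : (index w S < N)%N by have := index_mem w S; rewrite wS szS.
    pose l := Ordinal hl.
    have xl : x l = w by rewrite /x /= nth_index.
    have lk : l != k by apply/eqP => e; move: wv; rewrite -xl e xk eqxx.
    by rewrite /root -xl Ppoly_root.
  have ur : uniq_roots (rem v S) by rewrite uniq_rootsE rem_uniq.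
  have [q hq'] := uniq_roots_prod_XsubC hall ur.
  have szQ : size Q = N by rewrite size_prod_XsubC size_rem // szS prednK.
  have sq : (size q <= 1)%N.
    case: (eqVneq q 0) => [-> | qn0]; first by rewrite size_poly0.
    have := Ppoly_size hN x k; rewrite hq' size_mul // ?szQ; last first.
      by rewrite -size_poly_eq0 szQ -lt0n.
    have e : (size q + N).-1 = (size q + N.-1)%N by rewrite -{1}(prednK hN) addnS.
    by rewrite e => h; rewrite -(leq_add2r N.-1) add1n prednK.
  by exists q`_0 => w; rewrite hq' hornerM {1}(size1_polyC sq) hornerC.
have dVx : \det (Vmat x) = c0 * Q.[v].
  rewrite -hP Ppoly_horner; congr (\det _); apply: eq_Vmat => i; rewrite /upd.
  by case: eqP => // ->; rewrite xk.
have dVu : \det (Vmat (upd x k u)) = c0 * Q.[u] by rewrite -hP Ppoly_horner.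
rewrite eB pu px dVx dVu qRu qRv; rewrite px dVx in hE.
set Rest := \prod_(i | i != k) x i ^+ N.-1 in hE *.
set dB := \det (Bmat m x) in hE *.
have Rn : Rest != 0 by apply: contra hE => /eqP ->; rewrite mulr0 !mul0r.
have Bn : dB != 0 by apply: contra hE => /eqP ->; rewrite mulr0 !mul0r.
have c0n : c0 != 0 by apply: contra hE => /eqP ->; rewrite mul0r invr0 mulr0.
have Qvn : Q.[v] != 0 by apply: contra hE => /eqP ->; rewrite mulr0 invr0 mulr0.
have Qun : Q.[u] != 0.
  rewrite /Q horner_prod prodf_seq_neq0; apply/allP => w wr /=.
  rewrite hornerXsubC subr_eq0; apply/eqP => e.
  have wS : w \in S := mem_rem wr.
  move: wS; rewrite Rset_mem -e => /andP [_ h].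
  by move: (lt_trans h ru); rewrite ltxx.
have uvn : u - v != 0.
  rewrite subr_eq0; apply/eqP => e; move: rv; rewrite -e => h.
  by move: (lt_trans h ru); rewrite ltxx.
have [vn0 _] := root_nz fvn.
have eu : u ^+ N * (u + 1) ^+ m = u ^+ N.-1 * fw m u.
  by rewrite /fw mulrA -exprSr prednK.
have ev : v ^+ N * (v + 1) ^+ m = v ^+ N.-1 * fw m v.
  by rewrite /fw mulrA -exprSr prednK.
rewrite eu ev (eqP hf).
have uNn : u ^+ N.-1 != 0 by rewrite expf_neq0.
have vNn : v ^+ N.-1 != 0 by rewrite expf_neq0.
clear hP dVx dVu hE px pu eB qRu qRv hq.
clearbody Rest dB.
move: Rn Bn c0n Qvn Qun uvn uNn vNn fvn.
move: (u ^+ N.-1) (v ^+ N.-1) (fw m v) Rest dB c0 (Q.[v]) (Q.[u]) (u - v) => a1 a2 a3 a4 a5 a6 a7 a8 a9.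
move=> h4 h5 h6 h7 h8 h9 h1 h2 h3.
by field; rewrite ?h1 ?h2 ?h3 ?h4 ?h5 ?h6 ?h7 ?h8 ?h9.
Qed.
End Main.

Unset Implicit Arguments.

Theorem lemma10p3 (R : rcfType) (N d : nat) (z v u : R[i]) :
  (2 <= d)%N -> (1 <= N)%N ->
  z != 0 -> `|z| < r0 R d ->
  Eflat N d z != 0 ->
  v \in Rset N (d * N) z -> u \in Lset N (d * N) z ->
  chflat N d v u z =
    (if u * (u + 1) ^+ d.-1 == v * (v + 1) ^+ d.-1 then
       (qR N (d * N) z)^`().[v] * (u ^+ N * (u + 1) ^+ d.-1)
       / ((qR N (d * N) z).[u] * (v ^+ N * (v + 1) ^+ d.-1)) * (u - v)
     else 0).
Proof.
move=> hd hN hz hzr hE hv hu.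
case: d hd hzr hE hv hu => [|[|m]] // _ hzr hE hv hu.
exact: (@main_m R m.+1 N (ltn0Sn m) hN z hz hzr v u hE hv hu).
Qed.
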